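(* Let $k\ge4$ be an integer, let $(\mathcal X,\mathcal F,t)$ be an instance of SET-COVER, and let $\mathbb G$ be the graph constructed from it as described in the context. If $E'$ is a good $k$-completion set of $\mathbb G$, then $\{S_j\in\mathcal F: (S_j,S'_j)\in E'\}$ is a set cover of $\mathcal X$ of size $|E'|$.
   Context: SET-COVER instance $(\mathcal X,\mathcal F,t)$: a finite set $\mathcal X$ of items, a family $\mathcal F$ of nonempty subsets of $\mathcal X$ such that every item lies in some set of $\mathcal F$, and an integer $t$; a set cover is a subfamily of $\mathcal F$ whose union is $\mathcal X$. For $k\ge4$ the graph $\mathbb G$ is built as follows: (1) for each item $x_i\in\mathcal X$ add vertices $x_i,x'_i$ and the item edge $(x_i,x'_i)$; (2) for each set $S_j\in\mathcal F$ add a set subgraph $\mathbb G_j$ isomorphic to $K_{k-2}$ minus one edge, whose missing edge is between vertices named $S_j$ and $S'_j$; (3) for each $x_i\in\mathcal X$ and $S_j\in\mathcal F$ with $x_i\in S_j$, join both $x_i$ and $x'_i$ to every vertex of $\mathbb G_j$; (4) for each edge of the graph obtained so far other than the item edges, add $k-2$ new vertices forming a $k$-clique together with the endpoints of that edge; (5) add a vertex $P$, add the edge $(S_j,P)$ for every $S_j\in\mathcal F$, and for each such edge add $k-2$ new vertices forming a $k$-clique with $S_j$ and $P$. A connected graph has a $(k,1)$-cover if each edge lies in a clique of order $k$; a $k$-completion set of $\mathbb G$ is a set $E'$ of non-edges of $\mathbb G$ such that $\mathbb G\cup E'$ has a $(k,1)$-cover; it is good if $E'\subseteq\{(S_j,S'_j):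 S_j\in\mathcal F\}$. *)

(* Defs.v *)
From mathcomp Require Import all_boot.
Set Implicit Arguments. Unset Strict Implicit. Unset Printing Implicit Defensive.

Definition is_set_cover (X : finType) (F C : {set {set X}}) : Prop :=
  C \subset F /\ \bigcup_(S in C) S = [set: X].

Section Construction.
Variables (X : finType) (F : {set {set X}}) (k : nat).

Definition fam := {S : {set X} | S \in F}.

(* vertices of steps (1)-(3): item vertices (x, false) = x_i, (x, true) = x'_i;
   set-subgraph vertices (S_j, a), a : 'I_(k-2); a = 0 is S_j, a = 1 is S'_j *)
Definition BV := ((X * bool) + (fam * 'I_(k-2)))%type.

Definition base_adj0 (u v : BV) : bool :=
  match u, v with
  | inl (x, s), inl (y, s') => (x == y) && ~~ s && s'
  | inl (x, _), inr (j, _) => x \in val j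
  | inr (j, a), inr (j', b) =>                                   (* K_{k-2} - (S_j,S'_j) *)
      (j == j') && (val a < val b) && ~~ ((val a == 0) && (val b == 1))
  | _, _ => false
  end.
Definition base_adj (u v : BV) : bool := base_adj0 u v || base_adj0 v u.

Definition item_edge (u v : BV) : bool :=
  match u, v with
  | inl (x, s), inl (y, s') => (x == y) && (s != s')
  | _, _ => false
  end.

(* edges (as unordered pairs) that receive a k-clique gadget in step (4) *)
Definition gadget_edge (e : {set BV}) : bool :=
  [exists u, exists v, [&& e == [set u; v], base_adj u v & ~~ item_edge u v]].

Definition GV := {p : {set BV} * 'I_(k-2) | gadget_edge p.1}.

(* V = base vertices + step-(4) vertices + step-(5) gadget vertices + P *)
Definition V := (((BV + GV) + (fam * 'I_(k-2))) + unit)%type.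

Definition adj0 (u v : V) : bool :=
  match u, v with
  | inl (inl (inl a)), inl (inl (inl b)) => base_adj a b
  | inl (inl (inr g)), inl (inl (inl b)) => b \in (val g).1
  | inl (inl (inr g)), inl (inl (inr h)) =>
      ((val g).1 == (val h).1) && ((val g).2 != (val h).2)
  | inl (inl (inl (inr (j, a)))), inr tt => val a == 0
  | inl (inr (j, _)), inr tt => true
  | inl (inr (j, _)), inl (inl (inl (inr (j', a)))) => (j == j') && (val a == 0)
  | inl (inr (j, i)), inl (inr (j', i')) => (j == j') && (i != i')
  | _, _ => false
  end.

Definition Gadj (u v : V) : bool := adj0 u v || adj0 v u.

Definition setv (j : fam) (a : 'I_(k-2)) : V := inl (inl (inl (inr (j, a)))).

Definition adjE (E' : {set {set V}}) (u v : V) : bool :=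
  Gadj u v || ((u != v) && ([set u; v] \in E')).

Definition has_k1_cover (r : rel V) : Prop :=
  forall u v, r u v -> exists K : {set V},
    [/\ u \in K, v \in K, #|K| = k & forall x y, x \in K -> y \in K -> x != y -> r x y].

Definition completion_set (E' : {set {set V}}) : Prop :=
  (forall e, e \in E' -> exists u v, [/\ e = [set u; v], u != v & ~~ Gadj u v])
  /\ has_k1_cover (adjE E').

Definition good (E' : {set {set V}}) : Prop :=
  forall e, e \in E' -> exists j a b,
    [/\ val a = 0, val b = 1 & e = [set setv j a; setv j b]].

Definition chosen (E' : {set {set V}}) : {set {set X}} :=
  [set val j | j : fam & [exists a, exists b,
     [&& val a == 0, val b == 1 & [set setv j a; setv j b] \in E']]].

End Construction.

(* Main.v *)
Require Import Defs.
From mathcomp Require Import all_boot zify.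
Set Warnings "-notation-overridden".

Theorem lemma4 (k : nat) (X : finType) (F : {set {set X}})
  (hk : 4 <= k)
  (hne : forall S, S \in F -> S != set0)
  (hcov : \bigcup_(S in F) S = [set: X])
  (E' : {set {set V F k}})
  (hcomp : completion_set E')
  (hgood : good E') :
  is_set_cover F (chosen E') /\ #|chosen E'| = #|E'|.
Proof.
have h0 : 0 < k - 2 by rewrite subn_gt0 (leq_trans _ hk).
have h1 : 1 < k - 2 by rewrite ltn_subRL (leq_trans _ hk).
pose o0 := Ordinal h0. pose o1 := Ordinal h1.
have e0 : forall a : 'I_(k-2), val a = 0 -> a = o0 by move=> a ha; apply: val_inj.
have e1 : forall a : 'I_(k-2), val a = 1 -> a = o1 by move=> a ha; apply: val_inj.
pose g (j : fam F) : {set V F k} := [set setv j o0; setv j o1].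
have hgood' : forall e, e \in E' -> exists j, e = g j.
  move=> e /hgood [j [a [b [ha hb ->]]]]; exists j.
  by rewrite /g (e0 a ha) (e1 b hb).
have ginj : injective g.
  move=> j j' /setP /(_ (setv j o0)); rewrite !inE eqxx /=.
  by move/esym/orP => [] /eqP [->].
pose J := [set j | g j \in E'].
have hch : chosen E' = [set val j | j in J].
  apply/setP => S; apply/imsetP/imsetP => -[j hj ->]; exists j => //; rewrite !inE in hj *.
    case/existsP: hj => a /existsP [b /and3P [/eqP ha /eqP hb]].
    by rewrite (e0 a ha) (e1 b hb).
  by apply/existsP; exists o0; apply/existsP; exists o1; rewrite /= hj.
have hE : E' = g @: J.
  apply/setP => e; apply/idP/imsetP.
    by move=> he; case: (hgood' e he) => j ej; exists j; rewrite // inE -ej.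
  by case=> j; rewrite inE => hj ->.
split; last first.
  by rewrite hch hE !card_imset //; apply: val_inj.
split.
  rewrite hch; apply/subsetP => S /imsetP [j _ ->]; exact: valP.
apply/setP => x; rewrite in_setT; apply/bigcupP.
pose u : V F k := inl (inl (inl (inl (x,false)))).
pose v : V F k := inl (inl (inl (inl (x,true)))).
have huv : adjE E' u v.
  by rewrite /adjE /Gadj /= /base_adj /= eqxx.
case: (hcomp.2 u v huv) => K [uK vK cK cl].
have hEm : forall a b, [set a; b] \in E' -> exists j c, a = setv j c.
  move=> a b /hgood' [j ej]; have: a \in g j by rewrite -ej set21.
  by rewrite !inE => /orP [] /eqP ->; eexists; eexists.
have hy : forall y, y \in K -> y != u -> y != v -> exists j c, y = setv j c /\ x \in val j.
  move=> y yK yu yv.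
  have := cl u y uK yK; rewrite eq_sym => /(_ yu).
  rewrite /adjE => /orP [Hu|/andP [_ /hEm [j [c //]]]].
  have := cl v y vK yK; rewrite eq_sym => /(_ yv).
  rewrite /adjE => /orP [Hv|/andP [_ /hEm [j [c //]]]].
  move: y yu yv Hu Hv {yK} => [[[[[y s]|[j c]]|gg]|[j c]]|[]] yu yv Hu Hv.
  - move: Hu Hv; rewrite /Gadj /= /base_adj /=.
    rewrite !andbF !andbT !orbF !orFb orbb => /andP [/eqP exy hs] _.
    by move: yv; rewrite -exy hs eqxx.
  - move: Hu Hv; rewrite /Gadj /= /base_adj /= orbF orbb => Hu _.
    by exists j, c.
  - move: Hu Hv; rewrite /Gadj /=.
    case/existsP: (valP gg) => a /existsP [b /and3P [/eqP ee _ nit]].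
    rewrite ee !inE => /orP[]/eqP pa /orP[]/eqP qb.
    + by move: qb; rewrite -pa.
    + by move: nit; rewrite -pa -qb /= eqxx.
    + by move: nit; rewrite -pa -qb /= eqxx.
    + by move: qb; rewrite -pa.
  - by [].
  - by [].
set K' := K :\ u :\ v.
have cK' : #|K'| = k - 2.
  have := cardsD1 u K; rewrite uK cK (cardsD1 v (K :\ u)) !inE vK andbT.
  have vu : v != u by apply/negP => /eqP [].
  rewrite vu.
  rewrite /K'; set m := #|K :\ u :\ v|; lia.
have hy' : forall y, y \in K' -> exists j c, y = setv j c /\ x \in val j.
  by move=> y; rewrite !inE => /and3P [yv yu yK]; apply: hy.
have [y0 y0K] : exists y0, y0 \in K' by apply/card_gt0P; rewrite cK'.
have [j0 [c0 [ey0 xj0]]] := hy' y0 y0K.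
have sub : K' \subset [set setv j0 c | c : 'I_(k-2)].
  apply/subsetP => y yK'; have [j [c [ey _]]] := hy' y yK'.
  suff ej : j = j0 by rewrite ey ej imset_f.
  have [Ey|Ny] := eqVneq y y0; first by move: Ey; rewrite ey ey0 => -[].
  have y0K0 : y0 \in K by move: y0K; rewrite !inE => /and3P [].
  have yK0 : y \in K by move: yK'; rewrite !inE => /and3P [].
  move: (cl y0 y y0K0 yK0); rewrite eq_sym => /(_ Ny).
  rewrite /adjE ey ey0 => /orP [|/andP [_ /hgood' [j1 ej1]]].
    by rewrite /Gadj /= /base_adj /= => /orP [] /orP [] /andP [/andP [/eqP ->]].
  have hA : setv j0 c0 \in g j1 by rewrite -ej1 set21.
  have hB : setv j c \in g j1 by rewrite -ej1 set22.
  by move: hA hB; rewrite !inE => /orP [] /eqP [-> _] /orP [] /eqP [-> _].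
have cimg : #|[set setv j0 c | c : 'I_(k-2)]| <= k - 2.
  by apply: leq_trans (leq_imset_card _ _) _; rewrite card_ord.
have hKS : K' =i [set setv j0 c | c : 'I_(k-2)].
  by apply/subset_cardP => //; apply/eqP; rewrite eqn_leq subset_leq_card // cK' cimg.
have iK : forall c, setv j0 c \in K.
  move=> c; have : setv j0 c \in [set setv j0 c | c : 'I_(k-2)] by apply/imsetP; exists c.
  by rewrite -hKS !inE => /and3P [].
have n01 : setv j0 o0 != setv j0 o1 by apply/negP => /eqP [].
have := cl _ _ (iK o0) (iK o1) n01.
rewrite /adjE /Gadj /= /base_adj /=  !andbF /= => /andP [_ hg].
exists (val j0) => //; rewrite hch; apply/imsetP; exists j0; by rewrite // inE.
Qed.
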